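(* Let $k,n\ge 1$ and $\theta>0$, and let $P_{n,k}$ be the number of nonempty boxes in the random allocation $\mathbf K_{n,k}$ described in the context. (a) If $k\ge n$, then for $|u|\le 1$ $$\mathbf E\left(u^{P_{n,k}}\right)=\sum_{p=0}^{n-1}\binom{n}{p}u^{n-p}(1-u)^p\,\frac{\sigma_k((n-p)\theta)}{\sigma_k(n\theta)},$$ and $$\mathbf P(P_{n,k}=p)=\binom{n}{p}\sum_{q=1}^{p}(-1)^{p-q}\binom{p}{q}\frac{\sigma_k(q\theta)}{\sigma_k(n\theta)},\qquad p\in\{1,\dots,n\}.$$ Moreover $$\mathbf E(P_{n,k})=n\left(1-\frac{\sigma_k((n-1)\theta)}{\sigma_k(n\theta)}\right),$$ $$\mathrm{Var}(P_{n,k})=n\left(\frac{\sigma_k((n-1)\theta)}{\sigma_k(n\theta)}+(n-1)\frac{\sigma_k((n-2)\theta)}{\sigma_k(n\theta)}-n\left(\frac{\sigma_k((n-1)\theta)}{\sigma_k(n\theta)}\right)^2\right).$$ (b) If $k<n$, the same formula for $\mathbf E(u^{P_{n,k}})$ holds, and $$\mathbf P(P_{n,k}=p)=\binom{n}{p}\sum_{q=1}^{p}(-1)^{p-q}\binom{p}{q}\frac{\sigma_k(q\theta)}{\sigma_k(n\theta)},\qquad p\in\{1,\dots,k\},$$ the support of $P_{n,k}$ being $\{1,\dots,k\}$.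
   Context: Let $(\phi_m)_{m\ge1}$ be nonnegative reals with $\phi_1>0$ such that $\phi(x)=\sum_{m\ge1}\phi_m x^m/m!$ has radius of convergence $x_0\in(0,\infty]$. For $\theta>0$ define the polynomials $\sigma_k(\theta)$ by $e^{\theta\phi(x)}=1+\sum_{k\ge1}\sigma_k(\theta)x^k/k!$, with $\sigma_0\equiv 1$. Equivalently, $\sigma_k(\theta)=\sum_{l=1}^k B_{k,l}(\phi_\bullet)\theta^l$, where $B_{k,l}(\phi_\bullet)=\frac{k!}{l!}[x^k]\phi(x)^l$. Fix $\theta>0$ and integers $n,k\ge1$. Let $\mathbf K_{n,k}=(K_{n,k}(1),\dots,K_{n,k}(n))$ be a random vector in $\mathbb N_0^n$ with $$\mathbf P(\mathbf K_{n,k}=(k_1,\dots,k_n))=\frac{k!}{\sigma_k(n\theta)}\prod_{m=1}^n\frac{\sigma_{k_m}(\theta)}{k_m!}\quad\text{whenever } k_1+\dots+k_n=k.$$ This is the law of $(\xi_1,\dots,\xi_n)$ conditioned on $\xi_1+\dots+\xi_n=k$, where the $\xi_i$ are iid with probability generating function $\mathbf E u^{\xi}=\exp(\theta(\phi(xu)-\phi(x)))$ for some $x\in(0,x_0)$; this law does not depend on $x$. Define $P_{n,k}:=\#\{m:K_{n,k}(m)>0\}$, the number of nonempty boxes. *)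

(* Defs.v *)
From HB Require Import structures.
From mathcomp Require Import all_boot all_order all_algebra.
Set Implicit Arguments. Unset Strict Implicit. Unset Printing Implicit Defensive.
Import Order.TTheory GRing.Theory Num.Theory.
Local Open Scope ring_scope.

(* phi : nat -> R gives the coefficients phi_m (m >= 1); phi 0 is ignored.
   phi_trunc phi k = sum_{m=1}^k phi_m x^m / m!, the truncation of phi(x)
   at degree k (enough to compute [x^k] phi(x)^l). *)
Definition phi_trunc (R : fieldType) (phi : nat -> R) (k : nat) : {poly R} :=
  \poly_(i < k.+1) (if i == 0%N then 0 else phi i / (i`!)%:R).

Definition bellB (R : fieldType) (phi : nat -> R) (k l : nat) : R :=
  (k`!)%:R / (l`!)%:R * ((phi_trunc phi k) ^+ l)`_k.

(* sigma_k(theta) = sum_{l=0}^k B_{k,l} theta^l  (B_{k,0} = [k == 0], so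
   sigma_0 = 1 and sigma_k = sum_{l=1}^k B_{k,l} theta^l for k >= 1). *)
Definition sigma (R : fieldType) (phi : nat -> R) (k : nat) (th : R) : R :=
  \sum_(l < k.+1) bellB phi k l * th ^+ l.

Definition outcome (n k : nat) := {ffun 'I_n -> 'I_k.+1}.

Definition Kpmf (R : fieldType) (phi : nat -> R) (th : R) (n k : nat)
  (kv : outcome n k) : R :=
  if (\sum_(m < n) (kv m : nat))%N == k then
    (k`!)%:R / sigma phi k (n%:R * th) *
    \prod_(m < n) (sigma phi (kv m) th / ((kv m : nat)`!)%:R)
  else 0.

Definition Pnk (n k : nat) (kv : outcome n k) : nat := #|[set m | (0 < kv m)%N]|.

Definition Expect (R : fieldType) (phi : nat -> R) (th : R) (n k : nat)
  (X : outcome n k -> R) : R :=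
  \sum_(kv : outcome n k) Kpmf phi th kv * X kv.

Definition ProbP (R : fieldType) (phi : nat -> R) (th : R) (n k p : nat) : R :=
  \sum_(kv : outcome n k | Pnk kv == p) Kpmf phi th kv.

Definition VarP (R : fieldType) (phi : nat -> R) (th : R) (n k : nat) : R :=
  Expect phi th (fun kv : outcome n k => (Pnk kv)%:R ^+ 2)
  - (Expect phi th (fun kv : outcome n k => (Pnk kv)%:R)) ^+ 2.

(* Main.v *)
Require Import Defs.
From HB Require Import structures.
From mathcomp Require Import all_boot all_order all_algebra.
From mathcomp Require Import zify ring lra.
Set Implicit Arguments. Unset Strict Implicit. Unset Printing Implicit Defensive.
Import Order.TTheory GRing.Theory Num.Theory.
Local Open Scope ring_scope.


Section Exp.
Variable R : realFieldType.
Variable K : nat.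

Definition eqk (p q : {poly R}) := forall j, (j <= K)%N -> p`_j = q`_j.

Lemma eqk_refl p : eqk p p. Proof. by []. Qed.
Lemma eqk_sym p q : eqk p q -> eqk q p. Proof. by move=> h j hj; rewrite h. Qed.
Lemma eqk_trans p q r : eqk p q -> eqk q r -> eqk p r.
Proof. by move=> h1 h2 j hj; rewrite h1 // h2. Qed.
Lemma eqkD p q p' q' : eqk p p' -> eqk q q' -> eqk (p + q) (p' + q').
Proof. by move=> h1 h2 j hj; rewrite !coefD h1 // h2. Qed.
Lemma eqkM p q p' q' : eqk p p' -> eqk q q' -> eqk (p * q) (p' * q').
Proof.
move=> h1 h2 j hj; rewrite !coefM; apply: eq_bigr => i _.
have hi := ltn_ord i; rewrite h1 ?h2 //; lia.
Qed.
Lemma eqkX p q m : eqk p q -> eqk (p ^+ m) (q ^+ m).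
Proof. by move=> h; elim: m => [|m IH]; rewrite ?expr0 // !exprS; apply: eqkM. Qed.

Lemma val0 (T : {poly R}) : T`_0 = 0 -> forall i j, (j < i)%N -> (T ^+ i)`_j = 0.
Proof.
move=> T0; elim=> [//|i IH] j hj.
rewrite exprS coefM big1 // => l _.
case: l => [[|l] hl] /=; first by rewrite T0 mul0r.
rewrite IH ?mulr0 //.
rewrite ltnS in hj; rewrite ltnS in hl; lia.
Qed.

Lemma eqk_comp (T p q : {poly R}) : T`_0 = 0 -> eqk p q -> eqk (p \Po T) (q \Po T).
Proof.
move=> T0 h j hj; apply/eqP; rewrite -subr_eq0 -coefB -comp_polyB.
rewrite comp_polyE coef_sum big1 // => i _.
rewrite coefZ; case: (leqP i K) => hi.
  by rewrite coefB h // subrr mul0r.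
by rewrite val0 ?mulr0 //; exact: leq_ltn_trans hj hi.
Qed.

Definition Ep (a : R) : {poly R} := \poly_(l < K.+1) (a ^+ l / (l`!)%:R).

Lemma fact_neq0 l : (l`!)%:R != 0 :> R.
Proof. by rewrite pnatr_eq0 -lt0n fact_gt0. Qed.

Lemma eqk_EpM a b : eqk (Ep a * Ep b) (Ep (a + b)).
Proof.
move=> j hj; rewrite coefM coef_poly ltnS hj.
rewrite addrC exprDn mulr_suml; apply: eq_bigr => i _.
have hi : (i <= j)%N by rewrite -ltnS.
rewrite !coef_poly ltnS (leq_trans hi hj) ltnS (leq_trans (leq_subr _ _) hj).
have := bin_fact hi => /(congr1 (fun m => m%:R : R)); rewrite !natrM => hf.
rewrite -mulr_natr -hf -mulr_natr.
have h1 := fact_neq0 i; have h2 := fact_neq0 (j - i).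
have h3 : 'C(j, i)%:R != 0 :> R by rewrite pnatr_eq0 -lt0n bin_gt0.
field. by rewrite h1 h2 h3.
Qed.

Lemma Ep0 : Ep 0 = 1.
Proof.
apply/polyP=> i; rewrite coef_poly coef1 expr0n.
case: i => [|i] /=; first by rewrite divr1.
by case: ifP; rewrite ?mul0r.
Qed.

Variable T : {poly R}.
Hypothesis T0 : T`_0 = 0.

Definition e (a : R) := Ep a \Po T.

Lemma e_mul a b : eqk (e a * e b) (e (a + b)).
Proof. by rewrite /e -comp_polyM; apply: eqk_comp => //; apply: eqk_EpM. Qed.

Lemma e_exp a m : eqk (e a ^+ m) (e (m%:R * a)).
Proof.
elim: m => [|m IH].
  by rewrite expr0 mul0r /e Ep0 comp_polyC.
rewrite exprS; apply: eqk_trans (eqkM (eqk_refl _) IH) _.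
by rewrite mulrS mulrDl mul1r; apply: e_mul.
Qed.

Lemma e_coef0 a : (e a)`_0 = 1.
Proof.
rewrite -horner_coef0 /e horner_comp horner_coef0 T0 horner_coef0 coef_poly /=.
by rewrite expr0 divr1.
Qed.

Lemma comp_Xn (q : {poly R}) l : 'X^l \Po q = q ^+ l.
Proof.
elim: l => [|l IH]; first by rewrite !expr0 -polyC1 comp_polyC.
by rewrite !exprS comp_polyM comp_polyX IH.
Qed.

Lemma e_coef a j : (e a)`_j = \sum_(l < K.+1) a ^+ l / (l`!)%:R * (T ^+ l)`_j.
Proof.
rewrite /e /Ep poly_def.
rewrite linear_sum /= coef_sum; apply: eq_bigr => l _.
by rewrite comp_polyZ comp_Xn coefZ.
Qed.

End Exp.


Lemma coef_prod_ffun (R : realFieldType) n k (q : 'I_n -> {poly R}) :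
  (\prod_(i < n) q i)`_k =
  \sum_(kv : {ffun 'I_n -> 'I_k.+1} | (\sum_(i < n) (kv i : nat))%N == k)
     \prod_(i < n) (q i)`_(kv i).
Proof.
set Q := fun i => \poly_(j < k.+1) (q i)`_j.
have hQ : eqk k (\prod_(i < n) q i) (\prod_(i < n) Q i).
  apply: (big_ind2 (eqk k)) => //; first by move=> *; apply: eqkM.
  by move=> i _ j hj; rewrite /Q coef_poly ltnS hj.
rewrite hQ // /Q.
under eq_bigr do rewrite poly_def.
rewrite bigA_distr_bigA coef_sum /= [RHS]big_mkcond /=; apply: eq_bigr => f _.

under eq_bigr do rewrite -mul_polyC.
rewrite big_split /= -rmorph_prod prodrXr coefCM coefXn eq_sym.
by case: eqP => _; rewrite ?mulr1 ?mulr0.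
Qed.


Lemma phi_trunc0 (R : realFieldType) (phi : nat -> R) k : (phi_trunc phi k)`_0 = 0.
Proof. by rewrite coef_poly. Qed.

Lemma sigma_e (R : realFieldType) (phi : nat -> R) k j x : (j <= k)%N ->
  sigma phi j x = (j`!)%:R * (e k (phi_trunc phi k) x)`_j.
Proof.
move=> hjk; rewrite e_coef /sigma mulr_sumr.
have hT : eqk j (phi_trunc phi j) (phi_trunc phi k).
  by move=> i hi; rewrite !coef_poly !ltnS hi (leq_trans hi hjk).
rewrite (big_ord_widen _ (fun l => bellB phi j l * x ^+ l) (_ : j.+1 <= k.+1)%N) //.
rewrite [RHS](bigID (fun l : 'I_k.+1 => (l < j.+1)%N)) /=.
rewrite [X in _ = _ + X]big1 ?addr0; last first.
  move=> l; rewrite -leqNgt => hl.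
  by rewrite val0 ?phi_trunc0 ?mulr0.
apply: eq_bigr => l hl.
rewrite /bellB (eqkX l hT) //.
have h1 := fact_neq0 R j; have h2 := fact_neq0 R l.
field. by rewrite h2.
Qed.

Lemma Tcoef_ge0 (R : realFieldType) (phi : nat -> R) k :
  (forall m, (1 <= m)%N -> 0 <= phi m) -> forall l i, 0 <= ((phi_trunc phi k) ^+ l)`_i.
Proof.
move=> hp; elim=> [|l IH] i.
  by rewrite expr0 coef1 ler0n.
rewrite exprS coefM; apply: sumr_ge0 => j _; apply: mulr_ge0 => //.
rewrite coef_poly; case: ifP => // _; case: eqP => [_|/eqP hj]; first by [].
by apply: divr_ge0; [apply: hp; rewrite lt0n | apply: ler0n].
Qed.

Lemma Tpow_diag (R : realFieldType) (T : {poly R}) : T`_0 = 0 ->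
  forall l, (T ^+ l)`_l = T`_1 ^+ l.
Proof.
move=> T0; elim=> [|l IH]; first by rewrite !expr0 coef1.
rewrite exprS coefM big_ord_recl /= T0 mul0r add0r big_ord_recl /= subSS subn0 IH.
rewrite big1 ?addr0 -?exprS // => i _.
have hi := ltn_ord i; rewrite val0 ?mulr0 // /bump !leq0n /= !add1n; lia.
Qed.

Lemma sigma_pos (R : realFieldType) (phi : nat -> R) j x :
  (forall m, (1 <= m)%N -> 0 <= phi m) -> 0 < phi 1%N -> 0 < x -> 0 < sigma phi j x.
Proof.
move=> hp h1 hx; rewrite /sigma big_ord_recr /=.
apply: ltr_wpDl.
  apply: sumr_ge0 => l _; apply: mulr_ge0; last exact: exprn_ge0 (ltW hx).
  apply: mulr_ge0; last exact: Tcoef_ge0.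
  by apply: divr_ge0; apply: ler0n.
rewrite /bellB Tpow_diag ?phi_trunc0 // divff ?fact_neq0 // mul1r.
apply: mulr_gt0; last exact: exprn_gt0.
case: j => [|j]; first by rewrite expr0.
by apply: exprn_gt0; rewrite coef_poly /= divr1.
Qed.


Section Main.
Variable R : realFieldType.
Variable phi : nat -> R.
Variable th : R.
Variables n k : nat.
Hypothesis phi_nonneg : forall m, (1 <= m)%N -> 0 <= phi m.
Hypothesis phi1_pos : 0 < phi 1%N.
Hypothesis th_pos : 0 < th.

Let T := phi_trunc phi k.
Let E := e k T th.
Let C q := (E ^+ q)`_k.

Lemma sigma_C q : sigma phi k (q%:R * th) = (k`!)%:R * C q.
Proof. by rewrite (sigma_e _ _ (leqnn k)) /C (e_exp (phi_trunc0 _ _)). Qed.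

Lemma C_neq0 q : (0 < q)%N -> C q != 0.
Proof.
move=> hq; have := sigma_pos k phi_nonneg phi1_pos (mulr_gt0 (_ : 0 < q%:R) th_pos).
  rewrite sigma_C ltr0n hq => /(_ isT).
by apply: contraTneq => ->; rewrite mulr0 ltxx.
Qed.

Lemma E0 : E`_0 = 1.
Proof. by rewrite /E e_coef0 // phi_trunc0. Qed.

Lemma Kpmf_e (kv : outcome n k) : Kpmf phi th kv =
  if (\sum_(i < n) (kv i : nat))%N == k then (\prod_(i < n) E`_(kv i)) / C n else 0.
Proof.
rewrite /Kpmf; case: ifP => // _.
rewrite sigma_C.
have -> : \prod_(m < n) (sigma phi (kv m) th / ((kv m)`!)%:R) = \prod_(i < n) E`_(kv i).
  apply: eq_bigr => i _; have hk : (kv i <= k)%N by rewrite -ltnS.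
  rewrite (sigma_e _ _ hk).
  by rewrite mulrC mulKf ?fact_neq0.
have := fact_neq0 R k; move=> h.
by rewrite invfM mulrA mulfV // mul1r mulrC.
Qed.

Lemma W (a b : 'I_n -> R) :
  \sum_(kv : outcome n k) Kpmf phi th kv * \prod_(i < n) (if kv i == 0 :> nat then a i else b i)
  = (\prod_(i < n) ((a i - b i)%:P + b i *: E))`_k / C n.
Proof.
rewrite coef_prod_ffun mulr_suml [RHS]big_mkcond /=; apply: eq_bigr => kv _.
rewrite Kpmf_e; case: ifP => _; last by rewrite !mul0r.
rewrite mulrAC -big_split /=; congr (_ * _); apply: eq_bigr => i _.
rewrite coefD coefC coefZ; case: eqP => [->|_]; first by rewrite E0; ring.
by rewrite add0r mulrC.
Qed.

Definition wt (A : {set 'I_n}) (al be : R) (kv : outcome n k) :=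
  \prod_(i < n) (if kv i == 0 :> nat then (if i \in A then 0 else al)
                  else (if i \in A then 1 else be)).

Lemma W2 (A : {set 'I_n}) al be :
  \sum_(kv : outcome n k) Kpmf phi th kv * wt A al be kv
  = ((E - 1) ^+ #|A| * ((al - be)%:P + be *: E) ^+ (n - #|A|))`_k / C n.
Proof.
rewrite /wt (W (fun i => if i \in A then 0 else al) (fun i => if i \in A then 1 else be)).
congr (_`_k / _).
rewrite (bigID (fun i => i \in A)) /=.
have -> : \prod_(i in A)
     (((if i \in A then 0 else al) - (if i \in A then 1 else be))%:P +
      (if i \in A then 1 else be) *: E) = (E - 1) ^+ #|A|.
  rewrite -prodr_const; apply: eq_bigr => i ->.
  by rewrite sub0r scale1r addrC polyCN polyC1.
have hc : #|[predC A]| = (n - #|A|)%N.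
  by have := cardC A; rewrite card_ord; lia.
have -> : \prod_(i < n | i \notin A)
     (((if i \in A then 0 else al) - (if i \in A then 1 else be))%:P +
      (if i \in A then 1 else be) *: E) = ((al - be)%:P + be *: E) ^+ (n - #|A|).
  rewrite -hc -prodr_const; apply: eq_bigr => i /negbTE -> //.
by [].
Qed.

Lemma wt1 m (kv : outcome n k) : wt [set m] 1 1 kv = if (0 < kv m)%N then 1 else 0.
Proof.
rewrite /wt (bigD1 m) //= in_set1 eqxx big1 ?mulr1 => [|i /negbTE him].
  by rewrite lt0n; case: eqP.
by rewrite in_set1 him; case: eqP.
Qed.

Lemma wtU A B (kv : outcome n k) : wt A 1 1 kv * wt B 1 1 kv = wt (A :|: B) 1 1 kv.
Proof.
rewrite /wt -big_split /=; apply: eq_bigr => i _; rewrite in_setU.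
by case: eqP; case: (i \in A); case: (i \in B); rewrite /= ?mulr1 ?mul1r ?mulr0.
Qed.

Lemma Pnk_sum (kv : outcome n k) : (Pnk kv)%:R = \sum_(m < n) wt [set m] 1 1 kv.
Proof.
rewrite /Pnk -sum1_card natr_sum big_mkcond /=; apply: eq_bigr => m _.
by rewrite wt1 in_set; case: ifP.
Qed.

Lemma wt10 A (kv : outcome n k) : wt A 1 0 kv = ([set m | (0 < kv m)%N] == A)%:R.
Proof.
case: eqP => [<-|neq].
  rewrite /wt big1 // => i _; rewrite in_set lt0n.
  by case: eqP.
have : ~~ [forall i, (i \in [set m | (0 < kv m)%N]) == (i \in A)].
  apply/negP => /forallP h; apply: neq; apply/setP => i; exact/eqP.
rewrite negb_forall => /existsP [i hi].
rewrite /wt (bigD1 i) //=.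
rewrite in_set lt0n in hi; move: hi.
case: (_ == _ :> nat) => /=; case: (i \in A) => //= _; by rewrite mul0r.
Qed.

Lemma Pnk_eq p (kv : outcome n k) :
  (Pnk kv == p)%:R = \sum_(A : {set 'I_n} | #|A| == p) wt A 1 0 kv.
Proof.
under eq_bigr do rewrite wt10.
case: (boolP (Pnk kv == p)) => hp.
  rewrite (bigD1 [set m | (0 < kv m)%N]) //= eqxx big1 ?addr0 // => A /andP [_ hA].
  by rewrite eq_sym (negbTE hA).
rewrite big1 // => A hA; case: eqP => // hN.
by move: hp; rewrite /Pnk hN hA.
Qed.

Lemma upow u (kv : outcome n k) : u ^+ Pnk kv = wt set0 1 u kv.
Proof.
rewrite /Pnk -prodr_const big_mkcond /=; apply: eq_bigr => i _.
by rewrite in_set0 in_set lt0n; case: (_ == _ :> nat).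
Qed.

Definition sg q := C q / C n.

Lemma pgf_thm u : (1 <= k)%N ->
  Expect phi th (fun kv : outcome n k => u ^+ Pnk kv) =
  \sum_(p < n) ('C(n, p))%:R * u ^+ (n - p) * (1 - u) ^+ p * sg (n - p).
Proof.
move=> hk.
rewrite /Expect; under eq_bigr do rewrite upow.
rewrite W2 cards0 expr0 mul1r subn0 addrC exprDn coef_sum big_ord_recr /=.
have hk0 : (k == 0)%N = false by case: (k) hk.
rewrite subnn expr0 mul1r -polyC_exp coefMn coefC hk0 mul0rn addr0 mulr_suml.
apply: eq_bigr => p _.
rewrite exprZn -polyC_exp coefMn coefMC coefZ /sg /C.
by rewrite -mulr_natl; ring.
Qed.

Lemma pmf_thm p : (1 <= k)%N ->
  ProbP phi th n k p = ('C(n, p))%:R *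
       \sum_(1 <= q < p.+1) (-1) ^+ (p - q) * ('C(p, q))%:R * sg q.
Proof.
move=> hk; have hk0 : (k == 0)%N = false by case: (k) hk.
rewrite /ProbP big_mkcond /=.
rewrite (eq_bigr (fun kv => Kpmf phi th kv * \sum_(A : {set 'I_n} | #|A| == p) wt A 1 0 kv)); last first.
  by move=> kv _; rewrite -Pnk_eq; case: eqP; rewrite ?mulr1 ?mulr0.
under eq_bigr do rewrite mulr_sumr.
rewrite exchange_big /=.
rewrite (eq_bigr (fun A => ((E - 1) ^+ p)`_k / C n)); last first.
  move=> A /eqP hA; by rewrite W2 hA subr0 scale0r addr0 polyC1 expr1n mulr1.
rewrite sumr_const.
have -> : #|(fun A : {set 'I_n} => #|A| == p)| = 'C(n, p).
  have := card_draws 'I_n p; rewrite card_ord => <-.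
  by apply: eq_card => A; rewrite inE.
rewrite addrC -polyC1 -polyCN exprDn coef_sum big_ord_recl /=.
rewrite subn0 expr0 mulr1 -polyC_exp coefMn coefC hk0 mul0rn add0r.
rewrite big_add1 /= big_mkord mulr_suml mulr_sumr -sumrMnl; apply: eq_bigr => i _.
rewrite -polyC_exp coefMn coefCM /sg /C /bump /= add1n.
rewrite -mulr_natl -mulr_natl; ring.
Qed.

Definition G s := ((E - 1) ^+ s * E ^+ (n - s))`_k.

Lemma W11 A : \sum_(kv : outcome n k) Kpmf phi th kv * wt A 1 1 kv = G #|A| / C n.
Proof. by rewrite W2 subrr polyC0 add0r scale1r /G. Qed.

Lemma G1 : (1 <= n)%N -> G 1 = C n - C n.-1.
Proof.
move=> hn; rewrite /G expr1 mulrBl mul1r subn1 -exprS prednK // coefB.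
reflexivity.
Qed.

Lemma G2 : (n.-1)%:R * G 2 = (n.-1)%:R * (C n - 2%:R * C n.-1 + C n.-2).
Proof.
rewrite /G; case: n => [|[|m]] /=; try by rewrite !mul0r.
have -> : (m.+2 - 2 = m)%N by lia.
have -> : (E - 1) ^+ 2 * E ^+ m = E ^+ m.+2 - E ^+ m.+1 *+ 2 + E ^+ m.
  rewrite !exprS; ring.
rewrite coefD coefB coefMn /C [X in _ = _ * (_ - X + _)]mulr_natl; reflexivity.
Qed.

Lemma mean_thm : (1 <= n)%N ->
  Expect phi th (fun kv : outcome n k => (Pnk kv)%:R) = n%:R * (1 - sg n.-1).
Proof.
move=> hn; rewrite /Expect.
under eq_bigr do rewrite Pnk_sum mulr_sumr.
rewrite exchange_big /=.
under eq_bigr do rewrite W11 cards1 G1 //.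
rewrite sumr_const card_ord /sg -mulr_natl.
have := C_neq0 hn; move=> h; field.
by [].
Qed.

Lemma var_thm : (1 <= n)%N ->
  VarP phi th n k = n%:R * (sg n.-1 + (n.-1)%:R * sg n.-2 - n%:R * sg n.-1 ^+ 2).
Proof.
move=> hn; rewrite /VarP mean_thm //.
rewrite /Expect.
rewrite (eq_bigr (fun kv => \sum_(j < n) \sum_(i < n)
   Kpmf phi th kv * (wt [set j] 1 1 kv * wt [set i] 1 1 kv))); last first.
  move=> kv _; rewrite Pnk_sum expr2 mulr_suml mulr_sumr; apply: eq_bigr => j _.
  by rewrite mulr_sumr mulr_sumr.
rewrite exchange_big /=.
under eq_bigr do rewrite exchange_big /=.
have hm : forall m : 'I_n, \sum_(j < n) \sum_(i : outcome n k)
     Kpmf phi th i * (wt [set m] 1 1 i * wt [set j] 1 1 i)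
   = (C n - C n.-1) / C n + (n.-1)%:R * G 2 / C n.
  move=> m; under eq_bigr do under eq_bigr do rewrite wtU.
  under eq_bigr do rewrite W11.
  rewrite (bigD1 m) //= setUid cards1 G1 //; congr (_ + _).
  rewrite (eq_bigr (fun _ => G 2 / C n)) => [|j hj]; last first.
    by rewrite -/([set m; j]) cards2 eq_sym hj.
  rewrite (eq_bigl (fun i => i \in predC1 m)) // sumr_const cardC1 card_ord.
  by rewrite -mulrA mulr_natl.
under eq_bigr do rewrite hm.
rewrite sumr_const card_ord G2 -[_ *+ n]mulr_natl /sg.
have h := C_neq0 hn.
have hn1 : (n.-1)%:R = n%:R - 1 :> R.
  by rewrite -{2}(prednK hn) -addn1 natrD addrK.
rewrite hn1; field.
by [].
Qed.

Lemma Pnk_nat (kv : outcome n k) : Pnk kv = (\sum_(i < n) (0 < kv i : nat))%N.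
Proof.
rewrite /Pnk -sum1_card big_mkcond /=; apply: eq_bigr => i _.
by rewrite in_set; case: (0 < kv i)%N.
Qed.

Lemma Pnk_bounds (kv : outcome n k) : (1 <= k)%N ->
  (\sum_(i < n) (kv i : nat))%N = k -> (1 <= Pnk kv <= k)%N.
Proof.
move=> hk hs; rewrite Pnk_nat; apply/andP; split.
  rewrite lt0n; apply/negP => /eqP h0.
  have : (\sum_(i < n) (kv i : nat))%N = 0%N.
    apply/eqP; rewrite sum_nat_eq0; apply/forallP => i; apply/implyP => _.
    move/eqP: h0; rewrite sum_nat_eq0 => /forallP /(_ i) /implyP /(_ isT).
    by case: (kv i : nat).
  by rewrite hs => hk0; move: hk; rewrite hk0.
apply: (leq_trans _ (eq_leq hs)); apply: leq_sum => i _.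
by case: (kv i : nat).
Qed.

Lemma Kpmf_ge0 (kv : outcome n k) : (0 < n)%N -> 0 <= Kpmf phi th kv.
Proof.
move=> hn; rewrite /Kpmf; case: ifP => // _.
apply: mulr_ge0.
  apply: divr_ge0; first exact: ler0n.
  by apply: ltW; apply: sigma_pos => //; apply: mulr_gt0 => //; rewrite ltr0n; by [].
apply: prodr_ge0 => i _; apply: divr_ge0; last exact: ler0n.
exact: ltW (sigma_pos _ _ _ _).
Qed.

Lemma Kpmf_pos (kv : outcome n k) : (0 < n)%N ->
  (\sum_(i < n) (kv i : nat))%N = k -> 0 < Kpmf phi th kv.
Proof.
move=> hn hs; rewrite /Kpmf hs eqxx.
apply: mulr_gt0.
  apply: divr_gt0; first by rewrite ltr0n fact_gt0.
  by apply: sigma_pos => //; apply: mulr_gt0 => //; rewrite ltr0n.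
apply: prodr_gt0 => i _; apply: divr_gt0; last by rewrite ltr0n fact_gt0.
exact: sigma_pos.
Qed.

Lemma support_thm p : (1 <= k)%N -> (k < n)%N ->
  (0 < ProbP phi th n k p <-> (1 <= p <= k)%N).
Proof.
move=> hk hkn; have hn : (0 < n)%N by lia.
split.
  apply: contraTT => hp; rewrite -leNgt /ProbP big1 // => kv /eqP hkv.
  rewrite /Kpmf; case: eqP => // /eqP hs.
  by move: (Pnk_bounds hk (eqP hs)) hp; rewrite hkv => ->.
move=> /andP [hp1 hpk].
pose v (i : 'I_n) := ((i < p) + (i == 0 :> nat) * (k - p))%N.
have hv : forall i, (v i < k.+1)%N.
  by move=> i; rewrite /v; case: (i < p)%N; case: (i == 0 :> nat); lia.
pose f : outcome n k := [ffun i => inord (v i)].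
have hf : forall i, (f i : nat) = v i by move=> i; rewrite ffunE inordK.
have hsum1 : (\sum_(i < n) (i < p : nat))%N = p.
  rewrite -(big_mkord xpredT (fun i => (i < p : nat))).
  have hpn : (p <= n)%N by lia.
  rewrite (@big_cat_nat _ _ _ p 0 n xpredT (fun i => (i < p : nat)) (leq0n p) hpn) /=.
  rewrite (eq_big_nat _ _ (F2 := fun=> 1%N)) => [|i /andP [_ hi]]; last by rewrite hi.
  rewrite sum_nat_const_nat big1_seq ?addn0 ?subn0 ?muln1 // => i.
  move=> /andP [_]; rewrite mem_index_iota => /andP [hi _].
  by have -> : (i < p)%N = false by apply/negbTE; rewrite -leqNgt.
have hfs : (\sum_(i < n) (f i : nat))%N = k.
  under eq_bigr do rewrite hf.
  rewrite big_split /= hsum1 (bigD1 (Ordinal hn)) //= big1 ?addn0; first lia.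
  by move=> i hi; rewrite /= (_ : (i == 0 :> nat) = false) //; apply/negbTE; apply: contra hi => /eqP h; apply/eqP/val_inj.
have hfp : Pnk f = p.
  rewrite Pnk_nat -[RHS]hsum1; apply: eq_bigr => i _.
  rewrite hf /v; case: (ltnP i p) => hi /=; first by [].
  by rewrite (_ : (i == 0 :> nat) = false) //; apply/negbTE; rewrite -lt0n; lia.
rewrite /ProbP (bigD1 f) /=; last by rewrite hfp.
apply: ltr_pwDl; first exact: Kpmf_pos.
by apply: sumr_ge0 => kv _; apply: Kpmf_ge0.
Qed.

Lemma sig_sg q : sigma phi k (q%:R * th) / sigma phi k (n%:R * th) = sg q.
Proof. rewrite !sigma_C /sg; have h := fact_neq0 R k; rewrite invfM mulrACA mulfV // mul1r; reflexivity. Qed.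
End Main.

Theorem proposition1 (R : realFieldType) (phi : nat -> R) (th : R) (n k : nat)
  (phi_nonneg : forall m, (1 <= m)%N -> 0 <= phi m)
  (phi1_pos : 0 < phi 1%N)
  (phi_radius : exists r : R, 0 < r /\
       exists C : R, forall m, phi m * r ^+ m / (m`!)%:R <= C)
  (th_pos : 0 < th) (n_ge1 : (1 <= n)%N) (k_ge1 : (1 <= k)%N) :
  let sig := fun q : nat => sigma phi k (q%:R * th) / sigma phi k (n%:R * th) in
  let pgf := fun u : R => \sum_(p < n) ('C(n, p))%:R * u ^+ (n - p) * (1 - u) ^+ p * sig (n - p)%N in
  let pmf := fun p : nat => ('C(n, p))%:R *
       \sum_(1 <= q < p.+1) (-1) ^+ (p - q) * ('C(p, q))%:R * sig q in
  ((n <= k)%N ->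
     (forall u : R, `|u| <= 1 ->
        Expect phi th (fun kv : outcome n k => u ^+ Pnk kv) = pgf u)
  /\ (forall p : nat, (1 <= p <= n)%N -> ProbP phi th n k p = pmf p)
  /\ Expect phi th (fun kv : outcome n k => (Pnk kv)%:R) = n%:R * (1 - sig n.-1)
  /\ VarP phi th n k =
       n%:R * (sig n.-1 + (n.-1)%:R * sig n.-2 - n%:R * sig n.-1 ^+ 2))
  /\
  ((k < n)%N ->
     (forall u : R, `|u| <= 1 ->
        Expect phi th (fun kv : outcome n k => u ^+ Pnk kv) = pgf u)
  /\ (forall p : nat, (1 <= p <= k)%N -> ProbP phi th n k p = pmf p)
  /\ (forall p : nat, 0 < ProbP phi th n k p <-> (1 <= p <= k)%N)).
Proof.
move=> sig pgf pmf.
have hsig : forall q, sig q = sg phi th n k q by move=> q; rewrite /sig sig_sg.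
have hpgf : forall u, Expect phi th (fun kv : outcome n k => u ^+ Pnk kv) = pgf u.
  move=> u; rewrite pgf_thm //; apply: eq_bigr => p _; by rewrite hsig.
have hpmf : forall p, ProbP phi th n k p = pmf p.
  move=> p; rewrite pmf_thm // /pmf; congr (_ * _); apply: eq_big_nat => q _.
  by rewrite hsig.
split.
  move=> hnk; split; first by move=> u _; apply: hpgf.
  split; first by move=> p _; apply: hpmf.
  split; first by rewrite mean_thm // hsig.
  by rewrite var_thm // !hsig.
move=> hkn; split; first by move=> u _; apply: hpgf.
split; first by move=> p _; apply: hpmf.
by move=> p; apply: support_thm.
Qed.
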